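(* Let $P$ be any school choice problem and let $G^{\mathrm{DA}(P)}$ be the envy digraph of the DA matching. A student $i \in I$ is unimprovable if and only if $i$ does not lie on any directed cycle of $G^{\mathrm{DA}(P)}$, i.e. there do not exist $k\ge 1$ and distinct students $i=i_0,i_1,\dots,i_k$ with edges $(i_0,i_1),(i_1,i_2),\dots,(i_{k-1},i_k),(i_k,i_0)$ in $G^{\mathrm{DA}(P)}$.
   Context: A school choice problem $P$ consists of a finite set of students $I$, a finite set of schools $S$ (possibly containing a null school $s_\emptyset$ of unlimited capacity), for each student $i$ a strict preference $\succ_i$ over $S$, and for each school $s$ a quota $q_s$ and a strict priority order $\triangleright_s$ over $I$. A matching $\mu:I\to S$ assigns at most $q_s$ students to each school $s$. Matching $\mu$ weakly Pareto-dominates $\nu$ if every student weakly prefers $\mu_i$ to $\nu_i$; it Pareto-dominates $\nu$ if in addition some student strictly prefers $\mu_j$ to $\nu_j$; a matching is Pareto-efficient if no matching Pareto-dominates it. $\mathrm{DA}(P)$ is the matching produced by the student-proposing deferred acceptance algorithm: in each round, every student not tentatively held applies to her most preferred school that has not yet rejected her; each school tentatively holds the highest-priority applicants (new and previously held) up to its quota and rejects the rest; the algorithm stops when a round has no new rejection. $\mathrm{DA}_i(P)$ is $i$'s assigned school. Let $\mathcal M(P)$ be the set of Pareto-efficient matchings that weakly Pareto-dominate $\mathrm{DA}(P)$. A student $i$ is unimprovable if $\mu_i=\mathrm{DA}_i(P)$ for every $\mu\in\mathcal M(P)$ (improvable otherwise). The envy digraph $G^{\mathrm{DA}(P)}$ has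 vertex set $I$ and a directed edge $(i,j)$ iff $i$ strictly prefers $\mathrm{DA}_j(P)$ to $\mathrm{DA}_i(P)$ (''$i$ envies $j$''). *)

(* Defs.v *)
From mathcomp Require Import all_boot.
Set Implicit Arguments. Unset Strict Implicit. Unset Printing Implicit Defensive.

(* School choice problem:
   - students     : finite type I
   - schools      : finite type S
   - pref i s     : rank of school s in student i's preference (smaller = better);
                    strictness = injectivity of pref i (assumed in the theorem)
   - prio s i     : rank of student i in school s's priority (smaller = higher
                    priority); strictness = injectivity of prio s
   - q s          : quota of school s (a null school of unlimited capacity is a
                    school with quota >= #|I|). *)

Section SchoolChoice.
Variables (I S : finType) (pref : I -> S -> nat) (prio : S -> I -> nat)
          (q : S -> nat).

Definition best (i : I) (R : {set S}) : option S :=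
  [pick s | (s \notin R) && [forall t, (t \notin R) ==> (pref i s <= pref i t)]].

(* state of DA: for each student, the set of schools that rejected her so far.
   In each round every student is (held at or applying to) her best school not
   yet rejecting her. *)
Definition applicants (R : {ffun I -> {set S}}) (s : S) : {set I} :=
  [set j | best j (R j) == Some s].

Definition rejected_by (R : {ffun I -> {set S}}) (s : S) (i : I) : bool :=
  (i \in applicants R s) &&
  (q s <= #|[set j in applicants R s | prio s j < prio s i]|).

Definition da_step (R : {ffun I -> {set S}}) : {ffun I -> {set S}} :=
  [ffun i => match best i (R i) with
             | Some s => if rejected_by R s i then s |: R i else R i
             | None => R i
             end].

(* every non-final round adds a rejection, and there are at most #|I|*#|S|
   rejections, so after this many rounds a round with no new rejection has
   been reached (and further rounds change nothing). *)
Definition da_rejections : {ffun I -> {set S}} :=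
  iter (#|I| * #|S|).+1 da_step [ffun _ => set0].

(* DA_i(P) (None would mean unassigned, impossible when total quota >= #|I|) *)
Definition DA (i : I) : option S := best i (da_rejections i).

Definition wpref (i : I) (a b : option S) : bool :=
  match a, b with
  | Some x, Some y => pref i x <= pref i y
  | _, None => true
  | None, Some _ => false
  end.

Definition matching (mu : I -> S) : Prop :=
  forall s, #|[set i | mu i == s]| <= q s.

Definition weakly_dominates (mu nu : I -> option S) : Prop :=
  forall i, wpref i (mu i) (nu i).

Definition dominates (mu nu : I -> option S) : Prop :=
  weakly_dominates mu nu /\ exists j, ~~ wpref j (nu j) (mu j).

Definition pareto_efficient (mu : I -> S) : Prop :=
  matching mu /\
  ~ exists nu : I -> S, matching nu /\
      dominates (fun i => Some (nu i)) (fun i => Some (mu i)).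

Definition in_MP (mu : I -> S) : Prop :=
  pareto_efficient mu /\ weakly_dominates (fun i => Some (mu i)) DA.

Definition unimprovable (i : I) : Prop :=
  forall mu : I -> S, in_MP mu -> Some (mu i) = DA i.

Definition envies (i j : I) : bool := ~~ wpref i (DA i) (DA j).

Definition on_envy_cycle (i : I) : Prop :=
  exists p : seq I, [&& p != [::], uniq (i :: p) & cycle envies (i :: p)].

End SchoolChoice.

(* Main.v *)
Require Import Defs.
From mathcomp Require Import all_boot.
Set Implicit Arguments. Unset Strict Implicit. Unset Printing Implicit Defensive.

Lemma sum_lt_gen (T : finType) (F G : T -> nat) (j0 : T) :
  (forall j, F j <= G j) -> F j0 < G j0 -> \sum_j F j < \sum_j G j.
Proof.
move=> le lt; rewrite (bigD1 j0) //= [X in _ < X](bigD1 j0) //= -addSn.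
by apply: leq_add => //; apply: leq_sum => j _.
Qed.

Section DAfacts.
Variables (I S : finType) (pref : I -> S -> nat) (prio : S -> I -> nat) (q : S -> nat).
Hypothesis prio_strict : forall s, injective (prio s).
Hypothesis enough_seats : #|I| <= \sum_(s : S) q s.

Local Notation best := (best pref).
Local Notation app := (applicants pref).
Local Notation rej := (rejected_by pref prio q).
Local Notation step := (da_step pref prio q).
Local Notation Rs := (da_rejections pref prio q).

Lemma best_some (j : I) (R : {set S}) (s : S) : best j R = Some s ->
  s \notin R /\ forall t, t \notin R -> pref j s <= pref j t.
Proof.
rewrite /Defs.best; case: pickP => // x /andP[xR /forallP H] [<-]; split => // t tR.
exact: (implyP (H t) tR).
Qed.

Lemma best_none (j : I) (R : {set S}) : best j R = None -> forall s, s \in R.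
Proof.
rewrite /Defs.best; case: pickP => // H _ s; apply/negPn/negP => sR.
have [k Pk kmin] := @arg_minnP _ s (fun t => t \notin R) (pref j) sR.
move: (H k); rewrite Pk /= => /negP; apply; apply/forallP => t; apply/implyP => tR.
exact: kmin.
Qed.

Lemma step_mono (R : {ffun I -> {set S}}) (j : I) : R j \subset step R j.
Proof.
rewrite /da_step ffunE; case: (best j (R j)) => [s|] //; case: ifP => _ //.
exact: subsetUr.
Qed.

Definition meas (R : {ffun I -> {set S}}) := \sum_j #|R j|.

Lemma step_strict (R : {ffun I -> {set S}}) : step R != R -> meas R < meas (step R).
Proof.
move=> neq; have [j Hj]: exists j, step R j != R j.
  apply/existsP; apply: contraR neq => /existsPn H; apply/eqP/ffunP => j.
  exact/eqP/negPn/H.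
apply: (@sum_lt_gen _ _ _ j) => [k|]; first exact/subset_leq_card/step_mono.
by apply: proper_card; rewrite properEneq eq_sym Hj step_mono.
Qed.

Lemma meas_bound (R : {ffun I -> {set S}}) : meas R <= #|I| * #|S|.
Proof.
apply: (@leq_trans (\sum_(j : I) #|S|)); first by apply: leq_sum => j _; exact: max_card.
by rewrite sum_nat_const.
Qed.

Lemma fix_or n : let R := iter n step [ffun _ => set0] in
  step R = R \/ n <= meas R.
Proof.
elim: n => [|n IH] /=; first by right.
case: IH => [H|H]; first by left; rewrite H H.
case: (step (iter n step [ffun _ => set0]) =P iter n step [ffun _ => set0]) => e.
  by left; rewrite e e.
by right; apply: leq_ltn_trans H (step_strict _); apply/eqP.
Qed.

Lemma Rs_fix : step Rs = Rs.
Proof.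
case: (fix_or (#|I| * #|S|).+1) => // H.
by have := meas_bound (iter (#|I| * #|S|).+1 step [ffun _ => set0]); rewrite leqNgt H.
Qed.

Definition Inv (R : {ffun I -> {set S}}) := forall s j, s \in R j -> q s <= #|app R s|.

Lemma card_kept (R : {ffun I -> {set S}}) (s : S) : q s <= #|app R s| -> q s <= #|app (step R) s|.
Proof.
move=> hA; set A := app R s.
set K := [set k in A | ~~ rej R s k].
have KS : K \subset app (step R) s.
  apply/subsetP => k; rewrite /K inE => /andP[kA nr].
  move: (kA); rewrite /A inE => /eqP kb.
  by rewrite inE /da_step ffunE kb (negbTE nr) kb.
apply: (leq_trans _ (subset_leq_card KS)); rewrite leqNgt; apply/negP => lt.
have /subsetPn [k kA kK] : ~~ (A \subset K).
  by apply/negP => /subset_leq_card; rewrite leqNgt (leq_trans lt hA).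
have Pk : (k \in A) && (k \notin K) by rewrite kA kK.
have [k0 /andP[k0A k0K] kmin] := @arg_minnP _ k (fun x => (x \in A) && (x \notin K)) (prio s) Pk.
have rk0 : rej R s k0 by move: k0K; rewrite /K inE k0A /= negbK.
move: rk0 => /andP[_ hq].
have sub : [set j in A | prio s j < prio s k0] \subset K.
  apply/subsetP => j; rewrite inE => /andP[jA jlt]; apply/negPn/negP => jK.
  by have := kmin j; rewrite jA jK /= leqNgt jlt => /(_ isT).
by have := leq_trans hq (subset_leq_card sub); rewrite leqNgt lt.
Qed.

Lemma Inv_step (R : {ffun I -> {set S}}) : Inv R -> Inv (step R).
Proof.
move=> HR s j; case sR: (s \in R j); first by move=> _; apply/card_kept/(HR s j).
rewrite /da_step ffunE; case Hb: (best j (R j)) => [t|]; last by rewrite sR.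
case: ifP => r; last by rewrite sR.
rewrite !inE sR orbF => /eqP ->; apply: card_kept.
move: r => /andP[_ h]; apply: (leq_trans h); apply: subset_leq_card.
by apply/subsetP => x; rewrite inE => /andP[].
Qed.

Lemma Rs_Inv : Inv Rs.
Proof.
rewrite /da_rejections; elim: (#|I| * #|S|).+1 => [|n IH] /=.
  by move=> s j; rewrite ffunE inE.
exact: Inv_step.
Qed.

Lemma Rs_norej j s : best j (Rs j) = Some s -> ~~ rej Rs s j.
Proof.
move=> Hb; apply/negP => r.
have := congr1 (fun R : {ffun I -> {set S}} => R j) Rs_fix; rewrite /= {1}/da_step ffunE Hb r => e.
have [sn _] := best_some Hb.
by move: sn; rewrite -e !inE eqxx.
Qed.

Lemma Rs_cap s : #|app Rs s| <= q s.
Proof.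
rewrite leqNgt; apply/negP => lt.
have /card_gt0P [k kA] : 0 < #|app Rs s| by apply: leq_ltn_trans lt.
have [km kmA kmax] := @arg_maxnP _ k (fun x => x \in app Rs s) (prio s) kA.
have : ~~ rej Rs s km by apply: Rs_norej; move: kmA; rewrite inE => /eqP.
rewrite /rejected_by kmA /= -ltnNge => h.
have sub : app Rs s :\ km \subset [set j in app Rs s | prio s j < prio s km].
  apply/subsetP => x; rewrite in_setD1 => /andP[xk xA]; rewrite inE xA /= ltn_neqAle; have -> : prio s x <= prio s km by exact: (kmax x xA).
  by rewrite andbT; apply: contra xk => /eqP /prio_strict ->.
have := subset_leq_card sub; rewrite leqNgt.
move: lt; rewrite (cardsD1 km) kmA add1n ltnS => lt.
by rewrite (leq_trans h lt).
Qed.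

Lemma Rs_total j : exists s, best j (Rs j) = Some s.
Proof.
case Hb: (best j (Rs j)) => [s|]; first by exists s.
exfalso; have all_in := best_none Hb.
have H1 : \sum_(s : S) q s <= \sum_(s : S) #|app Rs s|.
  by apply: leq_sum => s _; apply: (Rs_Inv (all_in s)).
have H2 : \sum_(s : S) #|app Rs s| = \sum_(k : I) (best k (Rs k) != None).
  rewrite (eq_bigr (fun s => \sum_(k : I) (best k (Rs k) == Some s))); last first.
    by move=> s _; rewrite -sum1_card big_mkcond /=; apply: eq_bigr => k _; rewrite inE; case: (_ == _).
  rewrite exchange_big /=; apply: eq_bigr => k _.
  case: (best k (Rs k)) => [t|]; last by rewrite big1.
  by rewrite (bigD1 t) //= eqxx big1 // => x /negbTE xt; rewrite (inj_eq (@Some_inj _)) eq_sym xt.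
have H3 : \sum_(k : I) (best k (Rs k) != None) <= #|I|.-1.
  rewrite (bigD1 j) //= Hb /= add0n -(cardC1 j) -sum1_card.
  by apply: leq_sum => k _; case: (_ != _).
have h1 : #|I| <= #|I|.-1 by rewrite (leq_trans enough_seats) // (leq_trans H1) // H2.
have h0 : 0 < #|I| by apply/card_gt0P; exists j.
by move: h0 h1; case: #|I| => // m _; rewrite ltnn.
Qed.

End DAfacts.

Section Main.
Variables (I S : finType) (pref : I -> S -> nat) (prio : S -> I -> nat) (q : S -> nat).
Hypothesis pref_strict : forall i, injective (pref i).
Hypothesis prio_strict : forall s, injective (prio s).
Hypothesis enough_seats : #|I| <= \sum_(s : S) q s.
Variable da : I -> S.
Hypothesis Hda : forall j, DA pref prio q j = Some (da j).

Local Notation Rs := (da_rejections pref prio q).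

Lemma F_cap s : #|[set j | da j == s]| <= q s.
Proof.
apply: (leq_trans _ (Rs_cap pref q prio_strict s)); apply: subset_leq_card.
by apply/subsetP => j; rewrite !inE -/(DA pref prio q j) Hda.
Qed.

Lemma F_full j s : pref j s < pref j (da j) -> q s <= #|[set k | da k == s]|.
Proof.
move=> lt; have [_ hmin] := best_some (Hda j).
case sR: (s \in Rs j); last by move: (hmin s (negbT sR)); rewrite leqNgt lt.
apply: (leq_trans (Rs_Inv sR)); apply: subset_leq_card.
by apply/subsetP => k; rewrite !inE -/(DA pref prio q k) Hda.
Qed.

Lemma envE j k : envies pref prio q j k = (pref j (da k) < pref j (da j)).
Proof. by rewrite /envies Hda Hda /= ltnNge. Qed.

Definition okf (nu : I -> S) (f : {ffun I -> S}) :=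
  [forall s, #|[set j | f j == s]| <= q s] && [forall j, pref j (f j) <= pref j (nu j)].

Lemma pareto_above (nu : I -> S) : matching q nu ->
  exists mu : I -> S, pareto_efficient pref q mu /\ forall j, pref j (mu j) <= pref j (nu j).
Proof.
move=> mnu.
have ok0 : okf nu [ffun j => nu j].
  apply/andP; split; apply/forallP => x; last by rewrite ffunE.
  by apply: (leq_trans _ (mnu x)); apply: subset_leq_card; apply/subsetP => j; rewrite !inE ffunE.
have [f /andP[/forallP fm /forallP fd] fmin] :=
  @arg_minnP _ [ffun j => nu j] (okf nu) (fun f => \sum_j pref j (f j)) ok0.
exists (fun j => f j); split; last by move=> j; exact: fd.
split; first by move=> s; exact: fm.
move=> [nu' [mnu' [wd [j0 sj0]]]].
have ok' : okf nu [ffun j => nu' j].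
  apply/andP; split; apply/forallP => x; rewrite ?ffunE.
    by apply: (leq_trans _ (mnu' x)); apply: subset_leq_card; apply/subsetP => j; rewrite !inE ffunE.
  by apply: (leq_trans (wd x)); exact: fd.
have := fmin _ ok'; rewrite leqNgt => /negP; apply.
apply: (@sum_lt_gen _ _ _ j0) => [x|]; rewrite ffunE; first exact: (wd x).
by move: sj0; rewrite /= -ltnNge.
Qed.

Lemma dirA (i : I) : on_envy_cycle pref prio q i -> ~ unimprovable pref prio q i.
Proof.
move=> [p /and3P[pn up cp]] Hun.
set c := i :: p.
have sinj : injective (next c) by apply: (can_inj (prev_next up)).
have hdom : forall j, pref j (da (next c j)) <= pref j (da j).
  move=> j; case jc: (j \in c); last by rewrite next_nth jc.
  apply: ltnW; rewrite -envE; exact: next_cycle cp jc.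
have hi : pref i (da (next c i)) < pref i (da i).
  by rewrite -envE; apply: next_cycle cp _; rewrite inE eqxx.
have mnu : matching q (fun j => da (next c j)).
  move=> s; have -> : [set j | da (next c j) == s] = next c @^-1: [set k | da k == s].
    by apply/setP => j; rewrite !inE.
  by rewrite card_preimset //; exact: F_cap.
have [mu [pe hmu]] := pareto_above mnu.
have inmp : in_MP pref prio q mu.
  split => // j; rewrite Hda /=; apply: (leq_trans (hmu j)); exact: hdom.
have e : mu i = da i by have := Hun mu inmp; rewrite Hda => -[].
by have := leq_ltn_trans (hmu i) hi; rewrite e ltnn.
Qed.

Lemma dirB (i : I) : ~ on_envy_cycle pref prio q i -> unimprovable pref prio q i.
Proof.
move=> Hnc mu [[mmu _] wd]; rewrite Hda; apply/eqP; apply/negPn/negP => hne.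
apply: Hnc.
pose J := [set j | mu j != da j].
have Jlt : forall j, j \in J -> pref j (mu j) < pref j (da j).
  move=> j; rewrite inE => ne; have := wd j; rewrite Hda /= leq_eqVlt.
  by case/orP => [/eqP/pref_strict e|//]; rewrite e eqxx in ne.
pose A s := [set j in J | mu j == s].
pose B s := [set k in J | da k == s].
have AB : forall s, #|A s| <= #|B s|.
  move=> s; case: (set_0Vmem (A s)) => [->|[j jA]]; first by rewrite cards0.
  move: jA; rewrite inE => /andP[jJ /eqP js].
  have full := F_full (Jlt j jJ); rewrite js in full.
  pose D := [set k | da k == s]; pose C := D :\: B s.
  have hM := mmu s.
  have dis : A s :&: C = set0.
    apply/setP => k; rewrite !inE; apply/negP => /and3P[/andP[kJ _] kB kd].
    by rewrite kJ kd in kB.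
  have sub : A s :|: C \subset [set k | mu k == s].
    apply/subsetP => k; rewrite !inE => /orP[/andP[_ ->] //|/andP[kB kd]].
    move: kB; rewrite kd andbT negbK => /eqP ->; exact: kd.
  have hD : #|D| = #|B s| + #|C|.
    rewrite -(cardsID (B s) D) (setIidPr _) //.
    by apply/subsetP => k; rewrite !inE => /andP[_ ->].
  have := subset_leq_card sub; rewrite cardsU dis cards0 subn0 => h1.
  have h2 : #|A s| + #|C| <= #|B s| + #|C|.
    by rewrite -hD (leq_trans h1) // (leq_trans hM).
  by rewrite leq_add2r in h2.
pose f j := nth j (enum (B (mu j))) (index j (enum (A (mu j)))).
have Ain : forall j, j \in J -> j \in enum (A (mu j)) by move=> j jJ; rewrite mem_enum inE jJ eqxx.
have fP : forall j, j \in J -> f j \in B (mu j).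
  move=> j jJ; rewrite /f -mem_enum; apply: mem_nth.
  rewrite -cardE (leq_trans _ (AB (mu j))) // cardE index_mem; exact: Ain.
have fJ : forall j, j \in J -> f j \in J by move=> j /fP; rewrite inE => /andP[].
have fda : forall j, j \in J -> da (f j) = mu j by move=> j /fP; rewrite inE => /andP[_ /eqP].
have finj : {in J &, injective f}.
  move=> j j' jJ j'J e.
  have e1 : mu j = mu j' by rewrite -(fda j jJ) -(fda j' j'J) e.
  have jA : j \in enum (A (mu j')) by rewrite -e1; exact: Ain.
  have j'A := Ain j' j'J.
  have lt1 : forall x, x \in enum (A (mu j')) -> index x (enum (A (mu j'))) < size (enum (B (mu j'))).
    move=> x xA; rewrite -cardE (leq_trans _ (AB (mu j'))) // cardE index_mem //.
  move: e; rewrite /f e1 (@set_nth_default _ _ j j' _ (lt1 j' j'A)) => /eqP; rewrite nth_uniq ?enum_uniq ?lt1 // => /eqP ei.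
  by rewrite -(nth_index j jA) ei nth_index.
pose g j := if j \in J then f j else j.
have ginj : injective g.
  move=> x y; rewrite /g; case xJ: (x \in J); case yJ: (y \in J) => e //.
  - exact: finj.
  - by move: (fJ x xJ); rewrite e yJ.
  - by move: (fJ y yJ); rewrite -e xJ.
have gJ : forall x, (g x \in J) = (x \in J).
  by move=> x; rewrite /g; case xJ: (x \in J) => //; exact: fJ.
have iJ : i \in J by rewrite inE; apply: contra hne => /eqP ->.
have gi : g i != i.
  rewrite /g iJ; apply/eqP => e; have := fda i iJ; rewrite e => h.
  by move: iJ; rewrite inE h eqxx.
case Ho: (order g i) => [|[|n]].
- by have := order_gt0 g i; rewrite Ho.
- by have := iter_order ginj i; rewrite Ho /= => e; rewrite e eqxx in gi.
exists (traject g (g i) n.+1); apply/and3P; split => //.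
  by have := orbit_uniq g i; rewrite /orbit Ho.
have := cycle_orbit ginj i; rewrite /orbit Ho => cyc.
have allJ : forall m, iter m g i \in J by elim=> [|m IH]; rewrite /= ?gJ.
apply: (@sub_in_cycle _ [pred x | x \in J] (frel g)) cyc.
  move=> x y xJ0 _ /eqP <-; have xJ : x \in J by exact: xJ0.
  rewrite envE /g xJ fda //; exact: Jlt.
by apply/allP => x /trajectP [m _ ->]; exact: allJ.
Qed.

Theorem main_iff (i : I) : unimprovable pref prio q i <-> ~ on_envy_cycle pref prio q i.
Proof. split; [move=> h c; exact: dirA c h | exact: dirB]. Qed.

End Main.

Theorem proposition1 (I S : finType) (pref : I -> S -> nat)
  (prio : S -> I -> nat) (q : S -> nat)
  (pref_strict : forall i, injective (pref i))
  (prio_strict : forall s, injective (prio s))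
  (enough_seats : #|I| <= \sum_(s : S) q s)
  (i : I) :
  unimprovable pref prio q i <-> ~ on_envy_cycle pref prio q i.
Proof.
have [s0 _] := Rs_total pref prio enough_seats i.
pose da j := odflt s0 (DA pref prio q j).
have Hda : forall j, DA pref prio q j = Some (da j).
  move=> j; rewrite /da /DA; have [t ->] := Rs_total pref prio enough_seats j; by [].
exact: (main_iff pref_strict prio_strict Hda i).
Qed.
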